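(* Let $f,a,b,h_{1},h_{2}\in\mathbb{C}[x]$ be nonzero polynomials satisfying \[ b(x)=-h_{1}(x)h_{2}(x),\qquad f(x)a(x)=f(x-1)h_{1}(x)+f(x+1)h_{2}(x+1). \] Let $d=\max\{\deg(a),\deg(h_{1}),\deg(h_{2})\}$, $d_{f}=\deg(f)$, and write $a(x)=\sum_{i=0}^{d}a^{(i)}x^{i}$, $h_{1}(x)=\sum_{i=0}^{d}h_{1}^{(i)}x^{i}$, $h_{2}(x)=\sum_{i=0}^{d}h_{2}^{(i)}x^{i}$. Let $c_{1},c_{2}$ be the leading coefficients of $h_{1},h_{2}$, and $A,B$ the leading coefficients of $a,b$. Then: (1) If $\deg(a)=\deg(h_{1})>\deg(h_{2})$, then $c_{1}=A$, $c_{2}=-\frac{B}{A}$ and $d_{f}=\frac{a^{(d-1)}-h_{1}^{(d-1)}-h_{2}^{(d-1)}}{-A}$. (2) If $\deg(a)=\deg(h_{2})>\deg(h_{1})$, then $c_{1}=-\frac{B}{A}$, $c_{2}=A$ and $d_{f}=\frac{a^{(d-1)}-h_{1}^{(d-1)}-h_{2}^{(d-1)}-dA}{A}$. (3) If $\deg(h_{1})=\deg(h_{2})>\deg(a)$, then $\{c_{1},c_{2}\}=\{\sqrt{B},-\sqrt{B}\}$ and $d_{f}=\frac{a^{(d-1)}-h_{1}^{(d-1)}-h_{2}^{(d-1)}-dh_{2}^{(d)}}{h_{2}^{(d)}-h_{1}^{(d)}}$. (4) If $\deg(h_{1})=\deg(h_{2})=\deg(a)$, then $c_{1},c_{2}$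 are the roots of $x^{2}-Ax-B=0$, and: (a) if $c=c_{1}=c_{2}$ (so $B=-c^{2}$, $A=2c$), then $d_{f}$ is a solution of \[ \left(a^{(d-2)}-h_{1}^{(d-2)}-\left(h_{2}^{(d-2)}+(d-1)h_{2}^{(d-1)}+\tbinom{d}{2}h_{2}^{(d)}\right)\right)+d_{f}\left(h_{1}^{(d-1)}-\left(h_{2}^{(d-1)}+dh_{2}^{(d)}\right)\right)-\tbinom{d_{f}}{2}A=0; \] (b) otherwise $d_{f}=\frac{a^{(d-1)}-h_{1}^{(d-1)}-h_{2}^{(d-1)}-dh_{2}^{(d)}}{h_{2}^{(d)}-h_{1}^{(d)}}$.
   Context: Coefficients $a^{(i)},h_1^{(i)},h_2^{(i)}$ with $i<0$ are taken to be $0$. *)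

(* Defs.v *)
From HB Require Import structures.
From mathcomp Require Import all_boot all_order all_algebra.
Set Implicit Arguments. Unset Strict Implicit. Unset Printing Implicit Defensive.
Import Order.TTheory GRing.Theory Num.Theory.
Local Open Scope ring_scope.

(* degree of a polynomial: deg p = size p - 1 (only used for nonzero p) *)
Definition deg {R : nzRingType} (p : {poly R}) : nat := (size p).-1.

Definition coefz {R : nzRingType} (p : {poly R}) (i : int) : R :=
  match i with
  | Posz n => p`_n
  | Negz _ => 0
  end.

(* Main.v *)
Require Import Defs.
From HB Require Import structures.
From mathcomp Require Import all_boot all_order all_algebra.
From mathcomp Require Import zify ring lra.
Import Order.TTheory GRing.Theory Num.Theory.
Local Open Scope ring_scope.
Set Implicit Arguments. Unset Strict Implicit.

Definition topc {R : nzRingType} (p : {poly R}) (m k : nat) : R :=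
  if (k <= m)%N then p`_(m - k) else 0.

Definition rv {R : nzRingType} (m : nat) (p : {poly R}) : {poly R} :=
  \poly_(i < m.+1) topc p m i.

Lemma coef_rv (R : nzRingType) m (p : {poly R}) k : (rv m p)`_k = topc p m k.
Proof. by rewrite coef_poly /topc; case: ifP => //; case: ifP => // h /negbT; rewrite ltnS h. Qed.

Lemma rvD (R : nzRingType) m (p q : {poly R}) : rv m (p + q) = rv m p + rv m q.
Proof. by apply/polyP=> k; rewrite coefD !coef_rv /topc; case: ifP; rewrite ?coefD ?addr0. Qed.

Lemma rv0 (R : nzRingType) m : rv m (0 : {poly R}) = 0.
Proof. by apply/polyP=> k; rewrite coef0 coef_rv /topc coef0; case: ifP. Qed.

Lemma rvZ (R : nzRingType) m c (p : {poly R}) : rv m (c *: p) = c *: rv m p.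
Proof. by apply/polyP=> k; rewrite coefZ !coef_rv /topc; case: ifP; rewrite ?coefZ ?mulr0. Qed.

Lemma rv_sum (R : nzRingType) m n (F : 'I_n -> {poly R}) :
  rv m (\sum_(i < n) F i) = \sum_(i < n) rv m (F i).
Proof. exact: (big_morph (rv m) (@rvD R m) (@rv0 R m)). Qed.

Lemma rvXn (R : nzRingType) m s : (s <= m)%N -> rv m ('X^s : {poly R}) = 'X^(m - s).
Proof.
move=> hs; apply/polyP=> k; rewrite coef_rv /topc !coefXn.
case: leqP => hk.
  by congr (_%:R); apply/eqP; case: eqP; case: eqP => //; lia.
by case: eqP => //; lia.
Qed.

Lemma poly_expand (R : nzRingType) n (p : {poly R}) : (size p <= n.+1)%N ->
  p = \sum_(i < n.+1) p`_i *: 'X^i.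
Proof.
move=> hs; rewrite -poly_def; apply/polyP=> k; rewrite coef_poly.
by case: ifP => // /negbT; rewrite -leqNgt => h; rewrite nth_default // (leq_trans hs).
Qed.

Lemma rv_expand (R : nzRingType) m (p : {poly R}) : (size p <= m.+1)%N ->
  rv m p = \sum_(i < m.+1) p`_i *: 'X^(m - i).
Proof.
move=> hs; rewrite {1}(poly_expand hs) rv_sum; apply: eq_bigr => i _.
by rewrite rvZ rvXn // -ltnS.
Qed.

Lemma sum_mul_X (R : comNzRingType) n d (a : 'I_n -> R) (b : 'I_d -> R) (e : 'I_n -> nat) (g : 'I_d -> nat) :
  (\sum_(i < n) a i *: 'X^(e i)) * (\sum_(j < d) b j *: 'X^(g j)) =
  \sum_(i < n) \sum_(j < d) (a i * b j) *: ('X^(e i + g j) : {poly R}).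
Proof.
rewrite mulr_suml; apply: eq_bigr => i _; rewrite mulr_sumr; apply: eq_bigr => j _.
by rewrite -scalerAl -scalerAr scalerA exprD.
Qed.

Lemma rv_mul (R : comNzRingType) n d (p q : {poly R}) :
  (size p <= n.+1)%N -> (size q <= d.+1)%N ->
  rv (n + d) (p * q) = rv n p * rv d q.
Proof.
move=> hp hq; rewrite (rv_expand hp) (rv_expand hq) sum_mul_X.
rewrite {1}(poly_expand hp) {1}(poly_expand hq) sum_mul_X rv_sum.
apply: eq_bigr => i _; rewrite rv_sum; apply: eq_bigr => j _.
rewrite rvZ rvXn; last by have := ltn_ord i; have := ltn_ord j; lia.
by congr (_ *: 'X^_); have := ltn_ord i; have := ltn_ord j; lia.
Qed.

Lemma comp_polyXn_ (R : comNzRingType) j (q : {poly R}) : 'X^j \Po q = q ^+ j.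
Proof. by rewrite /comp_poly map_polyXn hornerXn. Qed.

Lemma coef_XaddC_exp (R : comNzRingType) (t : R) j i :
  (('X + t%:P) ^+ j)`_i = t ^+ (j - i) *+ 'C(j, i).
Proof.
rewrite addrC exprDn coef_sum.
have E : forall l : 'I_j.+1, ((t%:P ^+ (j - l) * 'X ^+ l) *+ 'C(j, l))`_i
   = if (l == i :> nat) then t ^+ (j - i) *+ 'C(j, i) else 0.
  move=> l; rewrite coefMn -rmorphXn coefCM coefXn.
  case: eqP => [->|h]; first by rewrite eqxx mulr1.
  by rewrite mulr0 mul0rn; case: eqP => // e; case: h; rewrite e.
rewrite (eq_bigr _ (fun l _ => E l)) -big_mkcond /=.
rewrite (big_ord1_eq _ (fun _ => t ^+ (j - i) *+ 'C(j, i))).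
by case: ltnP => // h; rewrite bin_small // mulr0n.
Qed.

Lemma comp_sum (R : comNzRingType) n (F : 'I_n -> {poly R}) q :
  (\sum_(i < n) F i) \Po q = \sum_(i < n) (F i \Po q).
Proof. exact: (big_morph (fun p => p \Po q) (fun x y => comp_polyD x y q) (comp_poly0 q)). Qed.

Lemma coef_shift (R : comNzRingType) n (f : {poly R}) (t : R) i :
  (size f <= n.+1)%N ->
  (f \Po ('X + t%:P))`_i = \sum_(j < n.+1) f`_j * (t ^+ (j - i) *+ 'C(j, i)).
Proof.
move=> hf; rewrite {1}(poly_expand hf) comp_sum coef_sum; apply: eq_bigr => j _.
by rewrite comp_polyZ comp_polyXn_ coefZ coef_XaddC_exp.
Qed.

Lemma sum_trunc (R : nmodType) M K (G G' : nat -> R) :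
  (forall u, (u < M)%N -> (u < K)%N -> G u = G' u) ->
  (forall u, (u < M)%N -> (K <= u)%N -> G u = 0) ->
  (forall u, (M <= u)%N -> (u < K)%N -> G' u = 0) ->
  \sum_(u < M) G u = \sum_(u < K) G' u.
Proof.
move=> h1 h2 h3.
rewrite (big_ord_widen (M + K) G (leq_addr K M)) (big_ord_widen (M + K) G' (leq_addl M K)).
rewrite big_mkcond [RHS]big_mkcond; apply: eq_bigr => u _.
case: (ltnP u M) => hM; case: (ltnP u K) => hK //=; by [apply: h1 | apply: h2 | rewrite h3].
Qed.

Lemma topc_shift (R : comNzRingType) n (f : {poly R}) (t : R) k :
  (size f <= n.+1)%N ->
  topc (f \Po ('X + t%:P)) n k =
  \sum_(u < k.+1) topc f n u * (t ^+ (k - u) *+ 'C(n - u, k - u)).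
Proof.
move=> hf; rewrite /topc; case: (leqP k n) => hk.
  rewrite (coef_shift _ _ hf) (reindex_inj rev_ord_inj) /=.
  apply: (@sum_trunc _ n.+1 k.+1
    (fun u => f`_(n.+1 - u.+1) * (t ^+ (n.+1 - u.+1 - (n - k)) *+ 'C(n.+1 - u.+1, n - k)))
    (fun u => (if (u <= n)%N then f`_(n - u) else 0) * (t ^+ (k - u) *+ 'C(n - u, k - u)))).
  - move=> u hu hu'; rewrite ifT // subSS; congr (_ * (_ *+ _)).
      by congr (_ ^+ _); lia.
    by rewrite -bin_sub; [congr 'C(_, _); lia | lia].
  - by move=> u hu hu'; rewrite bin_small ?mulr0n ?mulr0 //; lia.
  - by move=> u hu hu'; lia.
rewrite big1 // => u _; case: ifP => hu; last by rewrite mul0r.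
by rewrite bin_small ?mulr0n ?mulr0 //; have := ltn_ord u; lia.
Qed.

Lemma coefE3 (R : comNzRingType) n d (p q : {poly R}) :
  (size p <= n.+1)%N -> (size q <= d.+1)%N ->
  [/\ topc (p * q) (n + d) 0 = topc p n 0 * topc q d 0,
      topc (p * q) (n + d) 1 = topc p n 0 * topc q d 1 + topc p n 1 * topc q d 0 &
      topc (p * q) (n + d) 2 = topc p n 0 * topc q d 2 + topc p n 1 * topc q d 1
                              + topc p n 2 * topc q d 0].
Proof.
move=> hp hq; rewrite -!coef_rv rv_mul // !coefM.
by rewrite !big_ord_recr !big_ord0 /= !add0r !coef_rv.
Qed.

Lemma shiftE3 (R : comNzRingType) n (f : {poly R}) (t : R) :
  (size f <= n.+1)%N ->
  [/\ topc (f \Po ('X + t%:P)) n 0 = topc f n 0,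
      topc (f \Po ('X + t%:P)) n 1 = topc f n 0 * (t * n%:R) + topc f n 1 &
      topc (f \Po ('X + t%:P)) n 2 = topc f n 0 * (t ^+ 2 * 'C(n, 2)%:R)
           + topc f n 1 * (t * (n - 1)%:R) + topc f n 2].
Proof.
move=> hf; rewrite !topc_shift //.
rewrite !big_ord_recr !big_ord0 /= !add0r !subnn !bin0 !expr0 !mulr1n !mulr1.
rewrite !subn0 !expr1 bin1 subSS subn0 bin1 subn1 !mulr_natr.
done.
Qed.

Lemma topcD (R : nzRingType) (p q : {poly R}) m k : topc (p + q) m k = topc p m k + topc q m k.
Proof. by rewrite /topc; case: ifP; rewrite ?coefD ?addr0. Qed.

Lemma size_shift (R : idomainType) (f : {poly R}) t : size (f \Po ('X + t%:P)) = size f.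
Proof. by rewrite size_comp_poly2 // size_XaddC. Qed.

Lemma natsub1 (K : nzRingType) (h : {poly K}) d :
  (d - 1)%:R * topc h d 1 = (d%:R - 1) * topc h d 1.
Proof.
case: d => [|d']; first by rewrite /topc /= !mulr0.
by rewrite subn1 /= -addn1 natrD addrK.
Qed.

Lemma key (K : fieldType) (f a h1 h2 : {poly K}) n d :
  size f = n.+1 -> (size a <= d.+1)%N -> (size h1 <= d.+1)%N -> (size h2 <= d.+1)%N ->
  f * a = (f \Po ('X + (-1)%:P)) * h1 + (f \Po ('X + 1%:P)) * (h2 \Po ('X + 1%:P)) ->
  [/\ topc a d 0 = topc h1 d 0 + topc h2 d 0,
      topc a d 1 = topc h1 d 1 + topc h2 d 1 + d%:R * topc h2 d 0
                   + n%:R * (topc h2 d 0 - topc h1 d 0) &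
      topc h1 d 0 = topc h2 d 0 ->
      (topc a d 2 - topc h1 d 2 - (topc h2 d 2 + (d%:R - 1) * topc h2 d 1
          + 'C(d, 2)%:R * topc h2 d 0))
      + n%:R * (topc h1 d 1 - (topc h2 d 1 + d%:R * topc h2 d 0))
      - 'C(n, 2)%:R * topc a d 0 = 0].
Proof.
move=> hf ha hh1 hh2 E.
have hf' : (size f <= n.+1)%N by rewrite hf.
have F0nz : topc f n 0 != 0.
  by rewrite /topc /= subn0 -[n]/(n.+1.-1) -hf -lead_coefE lead_coef_eq0 -size_poly_eq0 hf.
have hm : (size (f \Po ('X + (-1)%:P)) <= n.+1)%N by rewrite size_shift.
have hp : (size (f \Po ('X + 1%:P)) <= n.+1)%N by rewrite size_shift.
have hq : (size (h2 \Po ('X + 1%:P)) <= d.+1)%N by rewrite size_shift.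
have e k := congr1 (fun p => topc p (n + d) k) E.
have e0 := e 0%N; have e1 := e 1%N; have e2 := e 2%N; clear e.
move: e0 e1 e2 => /=; rewrite !topcD.
case: (coefE3 hf' ha) => -> -> ->.
case: (coefE3 hm hh1) => -> -> ->.
case: (coefE3 hp hq) => -> -> ->.
case: (shiftE3 (-1) hf') => -> -> ->.
case: (shiftE3 1 hf') => -> -> ->.
case: (shiftE3 1 hh2) => -> -> ->.
set F0 := topc f n 0; set F1 := topc f n 1; set F2 := topc f n 2.
set A0 := topc a d 0; set A1 := topc a d 1; set A2 := topc a d 2.
set P0 := topc h1 d 0; set P1 := topc h1 d 1; set P2 := topc h1 d 2.
set Q0 := topc h2 d 0; set Q1 := topc h2 d 1; set Q2 := topc h2 d 2.
move=> e0 e1 e2.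
have a0 : A0 = P0 + Q0 by apply: (mulfI F0nz); rewrite mulrDr.
rewrite a0 in e1 e2.
move/eqP: e1; rewrite -subr_eq0 => /eqP e1.
have a1 : A1 = P1 + Q1 + d%:R * Q0 + n%:R * (Q0 - P0).
  apply: (mulfI F0nz); apply/eqP; rewrite -subr_eq0; apply/eqP.
  rewrite -[X in _ = X]e1; rewrite /F0 /F1 /A1 /P0 /P1 /Q0 /Q1; ring.
split => // hPQ.
rewrite a1 -hPQ in e2; rewrite -hPQ a0 -hPQ.
move/eqP: e2; rewrite -subr_eq0 => /eqP e2.
have hd := natsub1 h2 d.
have hn : (n - 1)%:R * F1 * P0 - (n - 1)%:R * F1 * P0 = 0 :> K by rewrite subrr.
apply: (mulfI F0nz); rewrite mulr0 -e2 -hd.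
rewrite /F0 /F1 /F2 /A1 /A2 /P0 /P1 /P2 /Q0 /Q1 /Q2; ring.
Qed.


Unset Implicit Arguments. Set Strict Implicit.

Lemma coefz_top (R : nzRingType) (p : {poly R}) m k :
  coefz p (m%:Z - k%:Z) = topc p m k.
Proof.
rewrite /topc; case: leqP => h; first by rewrite subzn.
rewrite -opprB subzn; last exact: ltnW.
have -> : (k - m = (k - m - 1).+1)%N by lia.
by [].
Qed.

Lemma coefz1 (R : nzRingType) (p : {poly R}) m : coefz p (m%:Z - 1) = topc p m 1.
Proof. exact: coefz_top. Qed.
Lemma coefz2 (R : nzRingType) (p : {poly R}) m : coefz p (m%:Z - 2) = topc p m 2.
Proof. exact: coefz_top. Qed.
Lemma coefz0 (R : nzRingType) (p : {poly R}) m : coefz p m%:Z = topc p m 0.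
Proof. by rewrite /topc /= subn0. Qed.

Lemma top0_lead (R : nzRingType) (p : {poly R}) m : deg p = m -> topc p m 0 = lead_coef p.
Proof. by rewrite /topc /= subn0 lead_coefE /deg => ->. Qed.

Lemma top0_zero (R : nzRingType) (p : {poly R}) m : p != 0 -> (deg p < m)%N -> topc p m 0 = 0.
Proof.
move=> p0 h; rewrite /topc /= subn0 nth_default //.
by move: h; rewrite /deg (polySpred p0).
Qed.

Lemma sz (R : nzRingType) (p : {poly R}) : p != 0 -> size p = (deg p).+1.
Proof. by move=> p0; rewrite /deg (polySpred p0). Qed.

Theorem theorem30 (C : numClosedFieldType) (f a b h1 h2 : {poly C}) :
  f != 0 -> a != 0 -> b != 0 -> h1 != 0 -> h2 != 0 ->
  b = - (h1 * h2) ->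
  f * a = (f \Po ('X - 1)) * h1 + (f \Po ('X + 1)) * (h2 \Po ('X + 1)) ->
  let d := maxn (deg a) (maxn (deg h1) (deg h2)) in
  let df := deg f in
  let c1 := lead_coef h1 in
  let c2 := lead_coef h2 in
  let A := lead_coef a in
  let B := lead_coef b in
  let a_ i := coefz a i in
  let h1_ i := coefz h1 i in
  let h2_ i := coefz h2 i in
  (* (1) *)
  ((deg a = deg h1 /\ (deg h2 < deg h1)%N) ->
     [/\ c1 = A, c2 = - (B / A) &
         df%:R = (a_ (d%:Z - 1) - h1_ (d%:Z - 1) - h2_ (d%:Z - 1)) / (- A)]) /\
  (* (2) *)
  ((deg a = deg h2 /\ (deg h1 < deg h2)%N) ->
     [/\ c1 = - (B / A), c2 = A &
         df%:R = (a_ (d%:Z - 1) - h1_ (d%:Z - 1) - h2_ (d%:Z - 1) - d%:R * A) / A]) /\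
  (* (3) *)
  ((deg h1 = deg h2 /\ (deg a < deg h1)%N) ->
     ((c1 = sqrtC B /\ c2 = - sqrtC B) \/ (c1 = - sqrtC B /\ c2 = sqrtC B)) /\
     df%:R = (a_ (d%:Z - 1) - h1_ (d%:Z - 1) - h2_ (d%:Z - 1) - d%:R * h2_ d%:Z)
             / (h2_ d%:Z - h1_ d%:Z)) /\
  (* (4) *)
  ((deg h1 = deg h2 /\ deg h2 = deg a) ->
     [/\ 'X ^+ 2 - A *: 'X - B%:P = ('X - c1%:P) * ('X - c2%:P),
         (* (a) *)
         (forall c, c = c1 -> c = c2 ->
            [/\ B = - c ^+ 2, A = 2%:R * c &
              (a_ (d%:Z - 2) - h1_ (d%:Z - 2)
                 - (h2_ (d%:Z - 2) + (d%:R - 1) * h2_ (d%:Z - 1) + ('C(d, 2))%:R * h2_ d%:Z))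
              + df%:R * (h1_ (d%:Z - 1) - (h2_ (d%:Z - 1) + d%:R * h2_ d%:Z))
              - ('C(df, 2))%:R * A = 0]) &
         (* (b) *)
         (c1 != c2 ->
            df%:R = (a_ (d%:Z - 1) - h1_ (d%:Z - 1) - h2_ (d%:Z - 1) - d%:R * h2_ d%:Z)
                    / (h2_ d%:Z - h1_ d%:Z))]).
Proof.
move=> f0 a0 b0 h10 h20 hb E d df c1 c2 A B a_ h1_ h2_.
rewrite /a_ /h1_ /h2_ !coefz1 !coefz2 !coefz0.
have ha : (size a <= d.+1)%N by rewrite sz // ltnS /d; lia.
have hh1 : (size h1 <= d.+1)%N by rewrite sz // ltnS /d; lia.
have hh2 : (size h2 <= d.+1)%N by rewrite sz // ltnS /d; lia.
have hf : size f = df.+1 by rewrite sz.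
rewrite -polyC1 -polyCN in E.
have [k0 k1 k2] := key hf ha hh1 hh2 E.
have hB : B = - (c1 * c2) by rewrite /B hb lead_coefN lead_coefM.
have nc1 : c1 != 0 by rewrite lead_coef_eq0.
have nc2 : c2 != 0 by rewrite lead_coef_eq0.
have nA : A != 0 by rewrite lead_coef_eq0.
move: k0 k1 k2.
set A1 := topc a d 1; set A2 := topc a d 2.
set P1 := topc h1 d 1; set P2 := topc h1 d 2.
set Q1 := topc h2 d 1; set Q2 := topc h2 d 2.
move=> k0 k1 k2.
split; [|split; [|split]].
- case=> e1 e2.
  have dd : d = deg h1 by rewrite /d; lia.
  have tA : topc a d 0 = A by apply: top0_lead; rewrite dd.
  have tP : topc h1 d 0 = c1 by apply: top0_lead; rewrite dd.
  have tQ : topc h2 d 0 = 0 by apply: top0_zero; rewrite // dd.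
  rewrite tA tP tQ addr0 in k0 k1.
  clearbody A1 A2 P1 P2 Q1 Q2 c1 c2 A B df d.
  split; first by rewrite k0.
    by rewrite hB k0; field.
  by rewrite k1 k0; field.
- case=> e1 e2.
  have dd : d = deg h2 by rewrite /d; lia.
  have tA : topc a d 0 = A by apply: top0_lead; rewrite dd.
  have tQ : topc h2 d 0 = c2 by apply: top0_lead; rewrite dd.
  have tP : topc h1 d 0 = 0 by apply: top0_zero; rewrite // dd.
  rewrite tA tP tQ add0r in k0 k1.
  clearbody A1 A2 P1 P2 Q1 Q2 c1 c2 A B df d.
  split; last 2 first.
  - by rewrite k0.
  - by rewrite k1 k0; field.
  by rewrite hB k0; field.
- case=> e1 e2.
  have dd : d = deg h1 by rewrite /d; lia.
  have tA : topc a d 0 = 0 by apply: top0_zero; rewrite // dd.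
  have tP : topc h1 d 0 = c1 by apply: top0_lead; rewrite dd.
  have tQ : topc h2 d 0 = c2 by apply: top0_lead; rewrite dd e1.
  rewrite tA tP tQ in k0 k1; rewrite tP tQ.
  clearbody A1 A2 P1 P2 Q1 Q2 c1 c2 A B df d.
  have ec2 : c2 = - c1 by apply: (addrI c1); rewrite -k0 subrr.
  have nz : c2 - c1 != 0.
    by rewrite ec2 -opprD oppr_eq0 -mulr2n mulrn_eq0 negb_or nc1.
  split; last by rewrite k1; field.
  set s := sqrtC B.
  have h : (c1 - s) * (c1 + s) = 0.
    transitivity (c1 ^+ 2 - s ^+ 2); first by ring.
    by rewrite /s sqrtCK hB ec2; ring.
  move/eqP: h; rewrite mulf_eq0 => /orP [h|h].
    by left; move: h; rewrite subr_eq0 => /eqP h; rewrite ec2 h.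
  by right; move: h; rewrite addr_eq0 => /eqP h; rewrite ec2 h opprK.
- case=> e1 e2.
  have dd : d = deg h1 by rewrite /d; lia.
  have tA : topc a d 0 = A by apply: top0_lead; rewrite dd e1 e2.
  have tP : topc h1 d 0 = c1 by apply: top0_lead; rewrite dd.
  have tQ : topc h2 d 0 = c2 by apply: top0_lead; rewrite dd e1.
  rewrite tA tP tQ in k0 k1 k2; rewrite tQ tP.
  clearbody A1 A2 P1 P2 Q1 Q2 c1 c2 A B df d.
  split.
  - by rewrite k0 hB -mul_polyC rmorphN rmorphM rmorphD /=; ring.
  - move=> c ec1 ec2; split.
    + by rewrite hB -ec1 -ec2; ring.
    + by rewrite k0 -ec1 -ec2; ring.
    + by apply: k2; rewrite -ec1 -ec2.
  move=> hne; have nz : c2 - c1 != 0 by rewrite subr_eq0 eq_sym.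
  by rewrite k1; field.
Qed.
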